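(* Let $G$ be a graph with $n$ vertices and at least one edge, and let $\Delta$ be its maximum vertex degree. Then $$EE(G) > e^{\sqrt{\Delta}} + (n-1) - \sqrt{\Delta}.$$
   Context: All graphs are finite, simple and undirected. For a graph $G$ with adjacency matrix $A(G)$ having eigenvalues $\lambda_1\ge\cdots\ge\lambda_n$, the Estrada index is $EE(G)=\sum_{i=1}^n e^{\lambda_i}$. *)

(* Defs.v *)
From HB Require Import structures.
From mathcomp Require Import all_boot all_order all_algebra.
From Stdlib Require Import Reals.
Set Implicit Arguments. Unset Strict Implicit. Unset Printing Implicit Defensive.

Definition simple_graph (n : nat) (e : rel 'I_n) : Prop :=
  symmetric e /\ irreflexive e.

Definition adjmx (n : nat) (e : rel 'I_n) : 'M[int]_n :=
  \matrix_(i, j) Posz (nat_of_bool (e i j)).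

Definition deg (n : nat) (e : rel 'I_n) (i : 'I_n) : nat := #|[set j | e i j]|.
Definition maxdeg (n : nat) (e : rel 'I_n) : nat := (\max_(i < n) deg e i)%N.

Definition int_to_R (z : int) : R :=
  match z with Posz k => INR k | Negz k => Ropp (INR (S k)) end.

Definition hornerR (p : {poly int}) (x : R) : R :=
  List.fold_right (fun c acc => Rplus (int_to_R c) (Rmult x acc)) 0%R (polyseq p).

(* l is the list of eigenvalues (with multiplicity) of the integer matrix A,
   i.e. the roots of its characteristic polynomial det(xI - A):
   det(xI - A) = prod_i (x - l_i) for every real x. *)
Definition is_spectrum (n : nat) (A : 'M[int]_n) (l : list R) : Prop :=
  List.length l = n /\
  forall x : R, hornerR (char_poly A) x =
                List.fold_right Rmult 1%R (List.map (fun t => Rminus x t) l).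

Definition estrada (l : list R) : R :=
  List.fold_right Rplus 0%R (List.map exp l).

(* Main.v *)
Require Import Defs.
From HB Require Import structures.
From mathcomp Require Import all_boot all_order all_algebra.
From Stdlib Require Import Reals.
From mathcomp Require Import Rstruct complex spectral sesquilinear.
From Stdlib Require Import Reals Lra Lia List.

Module RealPart.
Import List.
Local Open Scope R_scope.
Lemma sumR_mid (l1 l2 : list R) a :
  fold_right Rplus 0 (app l1 (a :: l2)) = a + fold_right Rplus 0 (app l1 l2).
Proof. induction l1 as [|b l1 IH]; simpl; [lra| rewrite IH; lra]. Qed.

Lemma sum_exp_ge (m : list R) :
  fold_right Rplus 0 (map exp m) >= INR (length m) + fold_right Rplus 0 m /\
  (fold_right Rplus 0 m <> 0 ->
   fold_right Rplus 0 (map exp m) > INR (length m) + fold_right Rplus 0 m).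
Proof.
  induction m as [|a m [IH1 IH2]]; cbn [length map fold_right].
  - simpl INR. split; [lra| intros H; lra].
  - rewrite S_INR. destruct (Req_dec a 0) as [Ha|Ha].
    + subst a. rewrite exp_0. split; [lra|]. intros H. 
      assert (Hn : fold_right Rplus 0 m <> 0) by lra. specialize (IH2 Hn). lra.
    + pose proof (exp_ineq1 a Ha). split; [lra|]. intros _. lra.
Qed.

Lemma final_real (l : list R) (mu s : R) :
  In mu l -> fold_right Rplus 0 l = 0 -> s <= mu -> 0 < s ->
  fold_right Rplus 0 (map exp l) > exp s + (INR (length l) - 1) - s.
Proof.
  intros Hin Hsum Hsm Hs.
  destruct (in_split mu l Hin) as [l1 [l2 ->]].
  rewrite map_app. simpl map. rewrite sumR_mid. rewrite sumR_mid in Hsum.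
  rewrite <- map_app.
  assert (Hlen : length (app l1 (mu :: l2)) = S (length (app l1 l2))).
  { rewrite !length_app. simpl. lia. }
  rewrite Hlen S_INR.
  destruct (sum_exp_ge (app l1 l2)) as [_ H2].
  assert (H3 := H2 ltac:(lra)).
  assert (Hes : 1 <= exp s) by (pose proof (exp_ineq1_le s); lra).
  assert (Hmu : exp mu = exp s * exp (mu - s)) by (rewrite <- exp_plus; f_equal; lra).
  pose proof (exp_ineq1_le (mu - s)).
  assert (exp s * exp (mu - s) >= exp s * (1 + (mu - s))) by nra.
  nra.
Qed.

Lemma prod_zero_in (l : list R) r :
  fold_right Rmult 1 (map (fun t => Rminus r t) l) = 0 -> In r l.
Proof.
  induction l as [|a l IH]; simpl; intros H; [lra|].
  destruct (Rmult_integral _ _ H) as [H1|H1]; [left; lra| right; auto].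
Qed.

End RealPart.
Import RealPart.

Import Order.TTheory GRing.Theory Num.Theory.
Set Implicit Arguments. Unset Strict Implicit.

Section PolyPart.
Local Open Scope ring_scope.

Lemma int_to_RE (z : int) : int_to_R z = (z%:~R : R).
Proof.
case: z => k; rewrite /int_to_R.
  by rewrite INRE.
by rewrite NegzE rmorphN INRE RoppE.
Qed.

Lemma hornerRE (p : {poly int}) (x : R) :
  hornerR p x = (map_poly (fun z : int => z%:~R : R) p).[x].
Proof.
rewrite /hornerR map_polyE horner_Poly.
elim: (polyseq p) => [|c s IH] //=.
by rewrite IH int_to_RE RplusE RmultE addrC mulrC.
Qed.

Lemma prodRE (l : list R) (x : R) :
  List.fold_right Rmult 1%R (List.map (fun t => Rminus x t) l) =
  (\prod_(t <- l) ('X - t%:P)).[x].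
Proof.
rewrite horner_prod; elim: l => [|a l IH] /=; first by rewrite big_nil.
by rewrite big_cons IH hornerXsubC RmultE RminusE.
Qed.

Lemma poly_ext_R (p q : {poly R}) : (forall x, p.[x] = q.[x]) -> p = q.
Proof.
move=> H; apply/eqP; rewrite -subr_eq0; apply/negPn/negP => nz.
suff: leq (size [seq (i%:R : R) | i <- iota 0 (size (p - q))]).+1 (size (p - q)).
  by rewrite size_map size_iota ltnn.
apply: max_poly_roots nz _ _.
  by apply/allP => x _; rewrite /root hornerD hornerN H subrr.
rewrite map_inj_uniq ?iota_uniq // => i j /eqP; rewrite eqr_nat => /eqP //.
Qed.

End PolyPart.

Section Spec.
Local Open Scope ring_scope.
Variables (n : nat) (e : rel 'I_n).

Lemma size_length (T : Type) (l : list T) : size l = List.length l.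
Proof. by elim: l => //= ? ? ->. Qed.

Lemma spec_poly (l : list R) : is_spectrum (adjmx e) l ->
  map_poly (fun z : int => z%:~R : R) (char_poly (adjmx e)) =
  \prod_(t <- l) ('X - t%:P).
Proof.
case=> _ H; apply: poly_ext_R => x.
by rewrite -hornerRE -prodRE.
Qed.

Lemma trace_adj : simple_graph e -> \tr (adjmx e) = 0.
Proof.
case=> _ irr; rewrite /mxtrace big1 // => i _.
by rewrite /adjmx mxE irr.
Qed.

Lemma sum_l_zero (l : list R) : simple_graph e -> is_spectrum (adjmx e) l ->
  leq 1 n -> List.fold_right Rplus 0%R l = 0%R.
Proof.
move=> sg Hs n0; have Hp := @spec_poly l Hs.
have := congr1 (fun p : {poly R} => p`_(n.-1)) Hp.
rewrite /= coef_map /= char_poly_trace // trace_adj // oppr0 rmorph0.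
case: Hs => Hlen _.
rewrite -Hlen -size_length coefPn_prod_XsubC; last first.
  by rewrite size_length Hlen -lt0n.
move/eqP; rewrite eq_sym oppr_eq0 => /eqP H.
transitivity (\sum_(p <- l) p); last exact: H.
elim: (l) => [|a s IH] /=; first by rewrite big_nil.
by rewrite big_cons IH.
Qed.

End Spec.

Section Graph.
Local Open Scope ring_scope.
Variables (n : nat) (e : rel 'I_n).

Lemma sum_deg (c : 'I_n) : \sum_j ((e c j : nat)%:R : R) = (deg e c)%:R.
Proof.
rewrite -natr_sum /deg; congr (_%:R).
rewrite -sum1_card [RHS]big_mkcond /=; apply: eq_bigr => j _.
by rewrite inE; case: (e c j).
Qed.

Definition xv (c : 'I_n) (s : R) j := if j == c then s else ((e c j : nat)%:R : R).
Definition av i j := ((e i j : nat)%:R : R).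

Lemma graph_bound (c : 'I_n) (s : R) : simple_graph e ->
  s ^+ 2 = (deg e c)%:R -> 0 <= s ->
  s * (\sum_j xv c s j * xv c s j) <= \sum_j (\sum_i xv c s i * av i j) * xv c s j.
Proof.
case=> sym irr Hs s0; set x := xv c s; set a := av.
have x0 j : 0 <= x j by rewrite /x /xv /xv; case: (j == c).
have a0 i j : 0 <= a i j by [].
have Hcc : a c c = 0 by rewrite /a /av irr.
have Hsum : \sum_j (x j * x j) = s * s + (deg e c)%:R.
  rewrite (bigD1 c) //= {1 2}/x /xv eqxx; congr (_ + _).
  rewrite -sum_deg [RHS](bigD1 c) //= irr add0r. apply: eq_bigr => j /negbTE jc.
  by rewrite /x /xv jc; case: (e c j); rewrite ?mulr1 ?mulr0.
have inner_c : (deg e c)%:R <= \sum_i x i * a i c.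
  rewrite -sum_deg; apply: ler_sum => i _.
  rewrite /x /xv /a /av (sym i c); case: eqP => [->|_]; first by rewrite irr mulr0.
  by case: (e c i); rewrite ?mulr1 ?mulr0.
have inner_j j : s * a c j <= \sum_i x i * a i j.
  rewrite (bigD1 c) //= {1}/x /xv eqxx lerDl; apply: sumr_ge0 => i _.
  exact: mulr_ge0.
have Hac : \sum_(j | j != c) a c j * x j = (deg e c)%:R.
  rewrite -sum_deg [RHS](bigD1 c) //= irr add0r; apply: eq_bigr => j /negbTE jc.
  by rewrite /x /xv /a /av jc; case: (e c j); rewrite ?mulr1 ?mulr0.
rewrite Hsum (bigD1 c) //= {2}/x /xv eqxx.
have -> : s * (s * s + (deg e c)%:R) =
          (deg e c)%:R * s + \sum_(j | j != c) (s * a c j) * x j.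
  rewrite (eq_bigr (fun j => s * (a c j * x j))); last by move=> j _; rewrite mulrA.
  rewrite -mulr_sumr Hac -expr2 Hs mulrDr [s * _]mulrC //.
apply: lerD; first by apply: ler_wpM2r.
by apply: ler_sum => j _; apply: ler_wpM2r.
Qed.

End Graph.

Section SpecC.
Local Open Scope ring_scope.
Local Open Scope sesquilinear_scope.
Variable n : nat.
Local Notation C := (complex R).
Local Notation RC := (real_complex R).

Lemma RC_real (x : R) : (RC x : C) \is Num.real.
Proof. by rewrite complex_real. Qed.

Lemma RC_conj (x : R) : (RC x : C)^* = RC x.
Proof. by rewrite conj_Creal // RC_real. Qed.

Lemma map_trC m p (M : 'M[R]_(m, p)) : (map_mx RC M) ^t* = map_mx RC M^T.
Proof. by apply/matrixP => i j; rewrite !mxE RC_conj. Qed.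

Lemma herm_AC (AR : 'M[R]_n) : AR^T = AR -> map_mx RC AR \is hermsymmx.
Proof.
move=> sym; apply: realsym_hermsym.
  apply/is_hermitianmxP; rewrite expr0 scale1r map_mx_id //.
  by rewrite map_trmx sym.
by apply/mxOverP => i j; rewrite mxE RC_real.
Qed.

Lemma spectral_bound (AR : 'M[R]_n) (vR : 'rV[R]_n) (s : R) :
  AR^T = AR -> s * (vR *m vR^T) 0 0 <= (vR *m AR *m vR^T) 0 0 ->
  0 < (vR *m vR^T) 0 0 ->
  exists r : R, s <= r /\ root (char_poly AR) r.
Proof.
move=> sym Hq Hn.
set AC := map_mx RC AR.
have Hh : AC \is hermsymmx := @herm_AC AR sym.
have HA : AC = invmx (spectralmx AC) *m diag_mx (spectral_diag AC) *m spectralmx AC.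
  by apply/orthomx_spectralP; exact: hermitian_normalmx.
have Hd := hermitian_spectral_diag_real Hh.
have HU : spectralmx AC \is unitarymx := spectral_unitarymx AC.
have Pu : spectralmx AC \in unitmx := spectral_unit AC.
have HiP : invmx (spectralmx AC) = (spectralmx AC)^t* := invmx_unitary HU.
set P := spectralmx AC in HA HU Pu HiP *.
set d := spectral_diag AC in HA Hd *.
have dreal k : d 0 k \is Num.real by move/mxOverP: Hd; apply.
set v := map_mx RC vR.
set w := v *m P^t*.
have Hwt : w^t* = P *m v^t*.
  by rewrite /w trmx_mul map_mxM trmxCK.
have HQ : RC ((vR *m AR *m vR^T) 0 0) = \sum_k d 0 k * `|w 0 k| ^+ 2.
  have -> : RC ((vR *m AR *m vR^T) 0 0) = (v *m AC *m v^t*) 0 0.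
    by rewrite /v /AC map_trC -!map_mxM [RHS]mxE.
  have -> : v *m AC *m v^t* = w *m diag_mx d *m w^t*.
    by rewrite Hwt /w HA HiP !mulmxA.
  rewrite mul_mx_diag mxE; apply: eq_bigr => k _.
  by rewrite !mxE normCK mulrAC mulrC mulrA.
have HN : RC ((vR *m vR^T) 0 0) = \sum_k `|w 0 k| ^+ 2.
  have -> : RC ((vR *m vR^T) 0 0) = (v *m v^t*) 0 0.
    by rewrite /v map_trC -!map_mxM [RHS]mxE.
  have -> : v *m v^t* = w *m w^t*.
    by rewrite Hwt /w -HiP !mulmxA -[v *m invmx P *m P]mulmxA mulVmx // mulmx1.
  rewrite mxE; apply: eq_bigr => k _.
  by rewrite !mxE normCK.
have [k Hk | Hall] := pickP (fun k => RC s <= d 0 k).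
  exists (complex.Re (d 0 k)); split.
    by move: Hk; rewrite /= -(RRe_real (dreal k)) lecR.
  have Hev : eigenvalue AC (d 0 k).
    apply/eigenvalueP; exists (row k P).
      have HPA : P *m AC = diag_mx d *m P.
        by rewrite {1}HA !mulmxA mulmxV // mul1mx.
      by rewrite -row_mul HPA row_mul row_diag_mx -scalemxAl -rowE.
    apply/negP => /eqP H0.
    have : row k (P *m P^t*) = 0 by rewrite row_mul H0 mul0mx.
    move/unitarymxP: HU => ->; rewrite row1 => /matrixP /(_ 0 k).
    by rewrite !mxE !eqxx /= => /eqP; rewrite oner_eq0.
  move: Hev; rewrite eigenvalue_root_char /AC -map_char_poly.
  by rewrite -(RRe_real (dreal k)) /root horner_map fmorph_eq0.
exfalso.
have lt k : d 0 k < RC s by rewrite real_ltNge ?RC_real ?dreal // Hall.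
have nn k : 0 <= (RC s - d 0 k) * `|w 0 k| ^+ 2.
  by apply: mulr_ge0; [rewrite subr_ge0 ltW | exact: exprn_ge0].
have H0 : \sum_k (RC s - d 0 k) * `|w 0 k| ^+ 2 = 0.
  apply/eqP; rewrite eq_le; apply/andP; split; last by apply: sumr_ge0.
  have -> : \sum_k (RC s - d 0 k) * `|w 0 k| ^+ 2 =
            RC (s * (vR *m vR^T) 0 0 - (vR *m AR *m vR^T) 0 0).
    rewrite rmorphB rmorphM /= HQ HN mulr_sumr -sumrB.
    by apply: eq_bigr => k _; rewrite mulrBl mulrA.
  by rewrite -(rmorph0 RC) lecR subr_le0.
have Hw k : `|w 0 k| ^+ 2 = 0.
  have := psumr_eq0P (fun k _ => nn k) H0 (i := k) isT.
  by move/eqP; rewrite mulf_eq0 subr_eq0 gt_eqF ?lt //= => /eqP.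
have : RC ((vR *m vR^T) 0 0) = 0 by rewrite HN big1.
rewrite -(rmorph0 RC) => /complexI H1.
by move: Hn; rewrite H1 ltxx.
Qed.

End SpecC.

Unset Implicit Arguments.
Local Open Scope ring_scope.

Lemma key_root (n : nat) (e : rel 'I_n) (i j : 'I_n) :
  simple_graph e -> e i j ->
  exists r : R, R_sqrt.sqrt (INR (maxdeg e)) <= r /\
     root (map_poly (fun z : int => (z%:~R : R)) (char_poly (adjmx e))) r.
Proof.
move=> sg eij; have sg' := sg; case: sg' => sym irr.
have n0 : leq 1 #|'I_n| by rewrite card_ord; apply: leq_ltn_trans (ltn_ord i).
have [c Hc] := bigop.eq_bigmax (fun k => deg e k) n0.
have HD : maxdeg e = deg e c by [].
set s := R_sqrt.sqrt (INR (maxdeg e)).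
have s0 : 0 <= s by rewrite /s RsqrtE sqrtr_ge0.
have Hs2 : s ^+ 2 = (deg e c)%:R by rewrite /s RsqrtE INRE sqr_sqrtr ?ler0n // HD.
set AR := map_mx (fun z : int => (z%:~R : R)) (adjmx e).
set vR := \row_k xv e c s k.
have symA : AR^T = AR by apply/matrixP => a b; rewrite !mxE sym.
have HN : (vR *m vR^T) 0 0 = \sum_k xv e c s k * xv e c s k.
  by rewrite mxE; apply: eq_bigr => k _; rewrite !mxE.
have HQ : (vR *m AR *m vR^T) 0 0 =
          \sum_b (\sum_a xv e c s a * av e a b) * xv e c s b.
  rewrite mxE; apply: eq_bigr => b _; rewrite !mxE; congr (_ * _).
  by apply: eq_bigr => a _; rewrite !mxE.
have Hdeg : leq 1 (deg e c).
  rewrite -HD; apply: leq_trans (leq_bigmax (F := deg e) i).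
  by apply/card_gt0P; exists j; rewrite inE.
have Hpos : 0 < (vR *m vR^T) 0 0.
  rewrite HN (bigD1 c) //= {1 2}/xv eqxx -expr2 Hs2.
  apply: ltr_wpDr; last by rewrite ltr0n.
  by apply: sumr_ge0 => k _; rewrite -expr2 sqr_ge0.
have [r [Hr Hroot]] := @spectral_bound n AR vR s symA
   ltac:(by rewrite HN HQ; apply: graph_bound) Hpos.
exists r; split => //.
by move: Hroot; rewrite /AR -map_char_poly.
Qed.

Close Scope ring_scope.

Theorem mainTheorem2 (n : nat) (e : rel 'I_n) :
  simple_graph e ->
  (exists i j : 'I_n, e i j) ->
  forall l : list R, is_spectrum (adjmx e) l ->
  Rgt (estrada l)
      (Rminus (Rplus (exp (sqrt (INR (maxdeg e)))) (Rminus (INR n) 1%R))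
              (sqrt (INR (maxdeg e)))).
Proof.
move=> sg [i [j eij]] l Hs.
have [r [Hr Hroot]] := @key_root n e i j sg eij.
have Hin : List.In r l.
  apply: prod_zero_in; rewrite prodRE -(spec_poly Hs); exact/eqP.
have n1 : leq 1 n by apply: leq_ltn_trans (ltn_ord i).
have Hsum := sum_l_zero sg Hs n1.
have Hlen : List.length l = n := proj1 Hs.
have Hd : leq 1 (maxdeg e).
  apply: leq_trans (leq_bigmax (F := deg e) i).
  by apply/card_gt0P; exists j; rewrite inE.
have s0 : Rlt 0 (sqrt (INR (maxdeg e))).
  apply: sqrt_lt_R0; apply: lt_0_INR; exact/ssrnat.ltP.
move/RleP: Hr => Hr.
have := @final_real l r _ Hin Hsum Hr s0; rewrite Hlen; exact.
Qed.
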